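(* Let $n$ be a positive integer and let $T$ be a nonempty subset of $\mathbb{N}_0^d$. If there are points $\alpha,\beta\in E_n^\infty(T)$ such that $\beta-\alpha\in\mathbb{N}^d$ (all entries strictly positive), then $E_n^\infty(T)=E_1^\infty(T\cup\{\alpha,\beta\})=\Lambda(T)\cap\mathbb{N}_0^d$.
   Context: $\mathbb{N}=\{1,2,\dots\}$, $\mathbb{N}_0=\{0,1,2,\dots\}$. For nonempty $\Gamma\subseteq\mathbb{N}_0^d$, $\Lambda(\Gamma)$ is the coset in $\mathbb{Z}^d$ generated by $\Gamma$ (smallest coset of a subgroup of $\mathbb{Z}^d$ containing $\Gamma$); each $\lambda\in\Lambda(\Gamma)$ can be written $\lambda=\gamma+\sum_{\alpha\in\Gamma,\alpha\neq\gamma}m_{\gamma,\alpha}(\alpha-\gamma)$ with $\gamma\in\Gamma$ and integers $m_{\gamma,\alpha}$, finitely many nonzero. $d(\Gamma,\lambda)$ is the infimum over all such representations of $\max\big(\sum_{m_{\gamma,\alpha}>0}m_{\gamma,\alpha},-\sum_{m_{\gamma,\alpha}<0}m_{\gamma,\alpha}\big)$, and $E_n(\Gamma)=\{\lambda\in\Lambda(\Gamma)\cap\mathbb{N}_0^d:d(\Gamma,\lambda)\leq n\}$. Set $E_n^1(T)=E_n(T)$, $E_n^{k+1}(T)=E_n(E_n^k(T))$, and $E_n^\infty(T)=\bigcup_{k\geq1}E_n^k(T)$. *)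

(* Defs.v *)
From mathcomp Require Import all_boot all_order all_algebra.
Set Implicit Arguments. Unset Strict Implicit. Unset Printing Implicit Defensive.
Import Order.TTheory GRing.Theory Num.Theory.
Local Open Scope ring_scope.

Definition pt (d : nat) := 'rV[int]_d.
Definition ptset (d : nat) := pt d -> Prop.

Definition in_N0 d (v : pt d) : Prop := forall i : 'I_d, 0 <= v ord0 i.
Definition in_N d (v : pt d) : Prop := forall i : 'I_d, 0 < v ord0 i.

Definition is_subgroup d (H : ptset d) : Prop :=
  H 0 /\ forall x y, H x -> H y -> H (x - y).
Definition is_coset d (C : ptset d) : Prop :=
  exists (c : pt d) (H : ptset d), is_subgroup H /\ forall x, C x <-> H (x - c).

Definition Lambda d (G : ptset d) : ptset d :=
  fun l => forall C : ptset d, is_coset C -> (forall g, G g -> C g) -> C l.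

(* A representation l = g + sum_{alpha in G, alpha <> g} m_alpha (alpha - g),
   given by g and a duplicate-free finite list of pairs (alpha, m_alpha)
   (finitely many nonzero coefficients), together with its cost
   max(sum_{m>0} m, - sum_{m<0} m). *)
Definition rep_cost d (G : ptset d) (l : pt d) (k : nat) : Prop :=
  exists (g : pt d) (s : seq (pt d * int)),
    [/\ G g,
        (forall p, p \in s -> G p.1 /\ p.1 <> g),
        uniq (map fst s),
        l = g + \sum_(p <- s) (p.1 - g) *~ p.2
      & Num.max (\sum_(p <- s | 0 < p.2) p.2)
                (\sum_(p <- s | p.2 < 0) (- p.2)) = k%:Z].

(* d(G, l) <= n : since costs are natural numbers, the infimum is <= n iff it
   is attained by a representation of cost <= n (infimum of empty set = +oo). *)
Definition dist_le d (G : ptset d) (l : pt d) (n : nat) : Prop :=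
  exists k : nat, (k <= n)%N /\ rep_cost G l k.

Definition E d (n : nat) (G : ptset d) : ptset d :=
  fun l => [/\ Lambda G l, in_N0 l & dist_le G l n].

(* E_n^{k+1}(T) = iter (k+1) E_n T ; E_n^oo = union over k >= 1 *)
Definition Einf d (n : nat) (T : ptset d) : ptset d :=
  fun l => exists k : nat, iter k.+1 (E n) T l.

(* Main.v *)
Require Import Defs.
From mathcomp Require Import all_boot all_order all_algebra.
From mathcomp Require Import ring lra zify.
Import Order.TTheory GRing.Theory Num.Theory.
Local Open Scope ring_scope.
Set Implicit Arguments. Unset Strict Implicit.

Ltac vring := apply/rowP => ?; rewrite !(mxE, mulmxnE); ring.

Section Aux.
Variable d : nat.
Implicit Types (G T K : ptset d) (x y z v l : pt d).

Lemma coset_comb C x y z : is_coset C -> C x -> C y -> C z -> C (x + y - z).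
Proof.
move=> [c [H [[H0 Hsub] HC]]] /HC hx /HC hy /HC hz; apply/HC.
have -> : x + y - z - c = (x - c) - ((z - c) - (y - c)) by vring.
exact: (Hsub _ _ hx (Hsub _ _ hz hy)).
Qed.

Lemma sub_E n G v : (forall g, G g -> in_N0 g) -> G v -> E n G v.
Proof.
move=> hN Gv; split => //; first by move=> C _ hG; apply: hG.
  by apply: hN.
exists 0%N; split => //; exists v, [::]; split => //.
- by rewrite big_nil addr0.
- by rewrite !big_nil.
Qed.

Lemma iter_N0 n G k v : (forall g, G g -> in_N0 g) -> iter k (E n) G v -> in_N0 v.
Proof. move=> hN; case: k => [|k] /=; first exact: hN. by case. Qed.

Lemma iter_mono n G j k v : (forall g, G g -> in_N0 g) -> (j <= k)%N ->
  iter j (E n) G v -> iter k (E n) G v.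
Proof.
move=> hN; elim: k => [|k IH]; first by rewrite leqn0 => /eqP ->.
rewrite leq_eqVlt => /orP [/eqP -> //| ] hjk hv.
rewrite /=; apply: sub_E; first by move=> g; apply: iter_N0.
by apply: IH.
Qed.

Lemma iter_in_C n G C k : is_coset C -> (forall g, G g -> C g) ->
  forall v, iter k (E n) G v -> C v.
Proof.
move=> hC hG; elim: k => [|k IH] v //=; first by apply: hG.
by case=> hL _ _; apply: hL.
Qed.

Lemma Einf_Lambda n G l : Einf n G l -> Lambda G l.
Proof. by case=> k hk C hC hG; apply: (iter_in_C hC hG hk). Qed.

Lemma Einf_N0 n G l : Einf n G l -> in_N0 l.
Proof. by case=> k /= []. Qed.

Lemma Einf_sub n G v : (forall g, G g -> in_N0 g) -> G v -> Einf n G v.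
Proof. by move=> hN hv; exists 0%N; apply: sub_E. Qed.

Lemma dist_comb G x y z : G x -> G y -> G z -> dist_le G (x + y - z) 1.
Proof.
move=> Gx Gy Gz.
have triv w : G w -> dist_le G w 1.
  move=> Gw; exists 0%N; split => //; exists w, [::]; split => //.
  - by rewrite big_nil addr0.
  - by rewrite !big_nil.
case: (eqVneq x z) => [->|nxz].
  have -> : z + y - z = y by vring.
  exact: triv.
case: (eqVneq y z) => [->|nyz].
  have -> : x + z - z = x by vring.
  exact: triv.
case: (eqVneq x y) => [<-|nxy].
  exists 1%N; split => //; exists x, [:: (z, -1)]; split => //.
  - by move=> p; rewrite inE => /eqP -> /=; split => // /eqP; rewrite eq_sym (negbTE nxz).
  - by rewrite big_cons big_nil mulrN1z; vring.
  - by rewrite !big_cons !big_nil.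
exists 1%N; split => //; exists y, [:: (x, 1); (z, -1)]; split => //.
- move=> p; rewrite !inE => /orP [] /eqP -> /=; split => // /eqP.
    by rewrite (negbTE nxy).
  by rewrite eq_sym (negbTE nyz).
- by rewrite /= inE nxz.
- by rewrite !big_cons big_nil mulr1z mulrN1z; vring.
- by rewrite !big_cons !big_nil.
Qed.

Lemma Einf_close n G x y z : (0 < n)%N -> (forall g, G g -> in_N0 g) ->
  Einf n G x -> Einf n G y -> Einf n G z -> in_N0 (x + y - z) ->
  Einf n G (x + y - z).
Proof.
move=> n0 hN [kx hx] [ky hy] [kz hz] hxyz.
set k := maxn kx (maxn ky kz).
have hx' : iter k.+1 (E n) G x by apply: (iter_mono hN _ hx); rewrite ltnS leq_maxl.
have hy' : iter k.+1 (E n) G y.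
  by apply: (iter_mono hN _ hy); rewrite ltnS (leq_trans (leq_maxl _ kz)) // leq_maxr.
have hz' : iter k.+1 (E n) G z.
  by apply: (iter_mono hN _ hz); rewrite ltnS (leq_trans (leq_maxr ky _)) // leq_maxr.
exists k.+1; split => //.
- move=> C hC hG; apply: coset_comb => //; by apply: hG.
- have [m [hm hr]] := dist_comb hx' hy' hz'.
  by exists m; split => //; apply: leq_trans hm n0.
Qed.

Inductive gen T (t0 : pt d) : pt d -> Prop :=
| gen0 : gen T t0 0
| genP x u : gen T t0 x -> T u -> gen T t0 (x + (u - t0))
| genM x u : gen T t0 x -> T u -> gen T t0 (x - (u - t0)).

Lemma gen_sub T t0 x y : gen T t0 y -> gen T t0 x -> gen T t0 (x - y).
Proof.
move=> hy hx; elim: hy => [|y' u _ IH Tu|y' u _ IH Tu].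
- by rewrite subr0.
- have -> : x - (y' + (u - t0)) = (x - y') - (u - t0) by vring.
  by apply: genM.
- have -> : x - (y' - (u - t0)) = (x - y') + (u - t0) by vring.
  by apply: genP.
Qed.

Lemma Lambda_gen T t0 l : Lambda T l -> gen T t0 (l - t0).
Proof.
move=> hl; apply: (hl (fun x => gen T t0 (x - t0))).
- exists t0, (gen T t0); split => //; split; first exact: gen0.
  by move=> x y hx hy; apply: gen_sub.
- move=> g Tg; rewrite -[g - t0]add0r; apply: genP => //; exact: gen0.
Qed.

Lemma main T K t0 alpha beta :
  T t0 -> (forall x, K x -> in_N0 x) -> (forall t, T t -> K t) ->
  K alpha -> K beta -> in_N (beta - alpha) ->
  (forall x y z, K x -> K y -> K z -> in_N0 (x + y - z) -> K (x + y - z)) ->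
  forall l, Lambda T l -> in_N0 l -> K l.
Proof.
move=> Tt0 KN TK Ka Kb hdel Kc l hl hl0.
set del := beta - alpha.
have step1 p M : K p -> K (p + del *+ M).
  move=> Kp; elim: M => [|M IH]; first by rewrite mulr0n addr0.
  have -> : p + del *+ M.+1 = (p + del *+ M) + beta - alpha by rewrite /del; vring.
  apply: Kc => //.
  have -> : p + del *+ M + beta - alpha = p + del *+ M.+1 by rewrite /del; vring.
  move=> i; rewrite !(mxE, mulmxnE).
  have := KN _ Kp i; have := hdel i; rewrite /del !mxE => h1 h2.
  by rewrite addr_ge0 // mulrn_wge0 // ltW.
have step2 (w : pt d) M : (\sum_(i < d) `|w ord0 i|%N <= M)%N -> in_N0 (w + del *+ M).
  move=> hM i; rewrite !(mxE, mulmxnE).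
  have hi : (`|w ord0 i|%N <= M)%N.
    apply: leq_trans hM; rewrite (bigD1 i) //=; exact: leq_addr.
  have := hdel i; rewrite /del !mxE => h1.
  clear hM; move: h1 hi; move: (beta ord0 i - alpha ord0 i) (w ord0 i) => a b.
  nia.
have step4 (x0 : pt d) : gen T t0 x0 ->
    exists M, forall M', (M <= M')%N -> K (t0 + x0 + del *+ M').
  elim => [|x u _ [M IH] Tu|x u _ [M IH] Tu].
  - by exists 0%N => M' _; rewrite addr0; apply: step1; apply: TK.
  - set w := t0 + (x + (u - t0)).
    exists (maxn M (\sum_(i < d) `|w ord0 i|%N)) => M'; rewrite geq_max => /andP [h1 h2].
    have -> : t0 + (x + (u - t0)) + del *+ M' = (t0 + x + del *+ M') + u - t0 by vring.
    apply: Kc; [by apply: IH | by apply: TK | by apply: TK |].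
    have -> : t0 + x + del *+ M' + u - t0 = w + del *+ M' by rewrite /w; vring.
    exact: step2.
  - set w := t0 + (x - (u - t0)).
    exists (maxn M (\sum_(i < d) `|w ord0 i|%N)) => M'; rewrite geq_max => /andP [h1 h2].
    have -> : t0 + (x - (u - t0)) + del *+ M' = (t0 + x + del *+ M') + t0 - u by vring.
    apply: Kc; [by apply: IH | by apply: TK | by apply: TK |].
    have -> : t0 + x + del *+ M' + t0 - u = w + del *+ M' by rewrite /w; vring.
    exact: step2.
have [M hM] := step4 _ (Lambda_gen t0 hl).
have Kl : K (l + del *+ M).
  by have := hM M (leqnn M); have -> : t0 + (l - t0) = l by vring.
have -> : l = (l + del *+ M) + alpha - (alpha + del *+ M) by vring.
apply: Kc => //; first exact: step1.
by have -> : l + del *+ M + alpha - (alpha + del *+ M) = l by vring.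
Qed.

End Aux.

Theorem lemma3p3 (d n : nat) (T : ptset d) :
  (0 < n)%N ->
  (exists t, T t) ->
  (forall t, T t -> in_N0 t) ->
  forall alpha beta : pt d,
    Einf n T alpha -> Einf n T beta -> in_N (beta - alpha) ->
    forall l : pt d,
      (Einf n T l <-> Einf 1 (fun x => T x \/ x = alpha \/ x = beta) l) /\
      (Einf 1 (fun x => T x \/ x = alpha \/ x = beta) l <-> (Lambda T l /\ in_N0 l)).
Proof.
move=> n0 [t0 Tt0] hTN alpha beta ha hb hdel l.
set S := fun x => T x \/ x = alpha \/ x = beta.
have hSN : forall g, S g -> in_N0 g.
  by move=> g [/hTN //|[->|->]]; apply: Einf_N0; eassumption.
have LamS v : Lambda S v -> Lambda T v.
  move=> hv C hC hT; apply: (hv C hC) => g [Tg|[->|->]]; first by apply: hT.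
  - exact: (Einf_Lambda ha hC hT).
  - exact: (Einf_Lambda hb hC hT).
have mainT v : Lambda T v -> in_N0 v -> Einf n T v.
  apply: (main Tt0 (@Einf_N0 _ n T) _ ha hb hdel).
  - by move=> t; apply: Einf_sub.
  - by move=> x y z; apply: Einf_close.
have mainS v : Lambda T v -> in_N0 v -> Einf 1 S v.
  have KSa : Einf 1 S alpha by apply: Einf_sub => //; right; left.
  have KSb : Einf 1 S beta by apply: Einf_sub => //; right; right.
  apply: (main Tt0 (@Einf_N0 _ 1 S) _ KSa KSb hdel).
  - by move=> t Tt; apply: Einf_sub => //; left.
  - by move=> x y z; apply: Einf_close.
split; split.
- move=> h; apply: mainS; [exact: Einf_Lambda h | exact: Einf_N0 h].
- move=> h; apply: mainT; [exact: LamS (Einf_Lambda h) | exact: Einf_N0 h].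
- move=> h; split; [exact: LamS (Einf_Lambda h) | exact: Einf_N0 h].
- by case=> h1 h2; apply: mainS.
Qed.
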